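(* Let $\varepsilon\in(0,1)$, let $z>1$ and let $m\ge 1$ be an integer. There is a deterministic streaming algorithm that receives numbers $x_1,x_2,\dots\in[0,1]$ one at a time, uses $\mathcal{O}(\log_{1/(1-\varepsilon)} z)$ space and $\mathcal{O}(1)$ time per arrival, and after the arrival of $x_q$ (for $q\ge m$) outputs either a number $v$ or ''No'', such that, writing $W_q=x_{q-m+1}x_{q-m+2}\cdots x_q$: if it outputs a number $v$ then $(1-\varepsilon)W_q\le v\le W_q$; and if it outputs ''No'' then $W_q\le (1-\varepsilon)/z$.
   Context: Space is measured in stored numbers/machine words; each input number is assumed exactly representable and multiplication/division of such numbers is exact and takes $\mathcal{O}(1)$ time. *)

(* Defs.v *)
From Stdlib Require Import Reals List.
Open Scope R_scope.

(* A unit-cost real RAM model for deterministic streaming algorithms.  *)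
(* Each instruction costs one time unit.  Space = the registers used:  *)
(* an algorithm has space bound sp if every register address it ever  *)
(* touches (in either bank, including indirect ones) is < sp.          *)

Inductive instr : Type :=
| RConst (d : nat) (c : R)
| RInput (d : nat)
| RCopy (d a : nat)
| RAdd (d a b : nat)
| RSub (d a b : nat)
| RMul (d a b : nat)
| RDiv (d a b : nat)              (* r[d] := r[a] / r[b]; crash if r[b]=0 *)
| RLoad (d p : nat)
| RStore (p a : nat)
| RJle (a b t : nat)
| NConst (d c : nat)
| NCopy (d a : nat)
| NAdd (d a b : nat)
| NSub (d a b : nat)              (* n[d] := n[a] - n[b] (truncated)    *)
| NLoad (d p : nat)
| NStore (p a : nat)
| NJle (a b t : nat)
| Jmp (t : nat)
| OutNum (a : nat)
| OutNo
| OutNone.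

Record mem : Type := Mem { rreg : nat -> R ; nreg : nat -> nat }.

Definition upd {A : Type} (f : nat -> A) (i : nat) (v : A) : nat -> A :=
  fun j => if Nat.eqb j i then v else f j.

Inductive result : Type := ResNum (v : R) | ResNo | ResNone.

Inductive outcome : Type :=
| Next (pc : nat) (M : mem)
| Halt (o : result) (M : mem).

Definition accessed (ins : instr) (M : mem) : list nat :=
  match ins with
  | RConst d _ => d :: nil
  | RInput d => d :: nil
  | RCopy d a => d :: a :: nil
  | RAdd d a b | RSub d a b | RMul d a b | RDiv d a b => d :: a :: b :: nil
  | RLoad d p => d :: p :: nreg M p :: nil
  | RStore p a => p :: a :: nreg M p :: nil
  | RJle a b _ => a :: b :: nil
  | NConst d _ => d :: nil
  | NCopy d a => d :: a :: nil
  | NAdd d a b | NSub d a b => d :: a :: b :: nil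
  | NLoad d p => d :: p :: nreg M p :: nil
  | NStore p a => p :: a :: nreg M p :: nil
  | NJle a b _ => a :: b :: nil
  | Jmp _ => nil
  | OutNum a => a :: nil
  | OutNo => nil
  | OutNone => nil
  end.

Definition setr (M : mem) (d : nat) (v : R) : mem := Mem (upd (rreg M) d v) (nreg M).
Definition setn (M : mem) (d : nat) (v : nat) : mem := Mem (rreg M) (upd (nreg M) d v).

(* one instruction; None = crash (division by zero) *)
Definition step (x : R) (ins : instr) (pc : nat) (M : mem) : option outcome :=
  let r := rreg M in let n := nreg M in
  match ins with
  | RConst d c => Some (Next (S pc) (setr M d c))
  | RInput d => Some (Next (S pc) (setr M d x))
  | RCopy d a => Some (Next (S pc) (setr M d (r a)))
  | RAdd d a b => Some (Next (S pc) (setr M d (r a + r b)))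
  | RSub d a b => Some (Next (S pc) (setr M d (r a - r b)))
  | RMul d a b => Some (Next (S pc) (setr M d (r a * r b)))
  | RDiv d a b =>
      if Req_EM_T (r b) 0 then None else Some (Next (S pc) (setr M d (r a / r b)))
  | RLoad d p => Some (Next (S pc) (setr M d (r (n p))))
  | RStore p a => Some (Next (S pc) (setr M (n p) (r a)))
  | RJle a b t => if Rle_dec (r a) (r b) then Some (Next t M) else Some (Next (S pc) M)
  | NConst d c => Some (Next (S pc) (setn M d c))
  | NCopy d a => Some (Next (S pc) (setn M d (n a)))
  | NAdd d a b => Some (Next (S pc) (setn M d (n a + n b)%nat))
  | NSub d a b => Some (Next (S pc) (setn M d (n a - n b)%nat))
  | NLoad d p => Some (Next (S pc) (setn M d (n (n p))))
  | NStore p a => Some (Next (S pc) (setn M (n p) (n a)))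
  | NJle a b t => if Nat.leb (n a) (n b) then Some (Next t M) else Some (Next (S pc) M)
  | Jmp t => Some (Next t M)
  | OutNum a => Some (Halt (ResNum (r a)) M)
  | OutNo => Some (Halt ResNo M)
  | OutNone => Some (Halt ResNone M)
  end.

(* None = did not halt within
   the time bound, exceeded the space bound, jumped outside P, or crashed. *)
Fixpoint exec (fuel sp : nat) (P : list instr) (x : R) (pc : nat) (M : mem)
  : option (result * mem) :=
  match fuel with
  | O => None
  | S f =>
      match nth_error P pc with
      | None => None
      | Some ins =>
          if forallb (fun a => Nat.ltb a sp) (accessed ins M) then
            match step x ins pc M with
            | Some (Next pc' M') => exec f sp P x pc' M'
            | Some (Halt o M') => Some (o, M')
            | None => None
            end
          else None
      end
  end.

Definition mem0 : mem := Mem (fun _ => 0) (fun _ => 0%nat).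

(* State/output after the first q arrivals xs 0, ..., xs (q-1)
   (i.e. x_1, ..., x_q in the paper's 1-based indexing). *)
Fixpoint run (T sp : nat) (P : list instr) (xs : nat -> R) (q : nat)
  : option (result * mem) :=
  match q with
  | O => Some (ResNone, mem0)
  | S k =>
      match run T sp P xs k with
      | Some (_, M) => exec T sp P (xs k) 0 M
      | None => None
      end
  end.

Fixpoint prodR (f : nat -> R) (a n : nat) : R :=
  match n with
  | O => 1
  | S k => prodR f a k * f (a + k)%nat
  end.

(* Main.v *)
Require Import Defs.
From Stdlib Require Import Reals List.
From Stdlib Require Import Lia Lra ZArith FunctionalExtensionality.
Open Scope R_scope.

Definition goes sp P x a M b M' n :=
  forall f, exec (n + f) sp P x a M = exec f sp P x b M'.

Lemma goes_trans sp P x a M b M' c M'' n n' :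
  goes sp P x a M b M' n -> goes sp P x b M' c M'' n' -> goes sp P x a M c M'' (n + n').
Proof. intros H1 H2 f. rewrite <- Nat.add_assoc, H1, H2. reflexivity. Qed.

Lemma goes_step sp P x a M ins b M' :
  nth_error P a = Some ins ->
  forallb (fun a => Nat.ltb a sp) (accessed ins M) = true ->
  step x ins a M = Some (Next b M') ->
  goes sp P x a M b M' 1.
Proof. intros H1 H2 H3 f. simpl. rewrite H1, H2, H3. reflexivity. Qed.

Lemma exec_halt f sp P x a M ins o M' :
  nth_error P a = Some ins ->
  forallb (fun a => Nat.ltb a sp) (accessed ins M) = true ->
  step x ins a M = Some (Halt o M') ->
  exec (S f) sp P x a M = Some (o, M').
Proof. intros H1 H2 H3. simpl. rewrite H1, H2, H3. reflexivity. Qed.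

Definition addr (K j : nat) : nat := 8 + j mod K.

Definition prog (c : R) (m K : nat) : list instr :=
 (* 0 *) NConst 4 0 :: NJle 1 4 59 ::
 (* 2 *) RInput 1 :: NConst 4 1 :: NAdd 0 0 4 :: RConst 2 0 :: RJle 1 2 52 ::
 (* 7 *) RMul 0 0 1 :: RLoad 2 2 :: RConst 3 c :: RMul 2 2 3 :: RJle 2 0 29 ::
 (* 12 *) NConst 5 1 :: NConst 4 K :: NJle 4 3 17 :: NAdd 3 3 5 :: Jmp 22 ::
 (* 17 *) NAdd 1 1 5 :: NConst 6 (8+K) :: NJle 6 1 21 :: Jmp 22 :: NConst 1 8 ::
 (* 22 *) NAdd 2 2 5 :: NConst 6 (8+K) :: NJle 6 2 26 :: Jmp 27 :: NConst 2 8 ::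
 (* 27 *) NStore 2 0 :: RStore 2 0 ::
 (* 29 *) NConst 5 1 :: NJle 3 5 44 :: NCopy 4 1 ::
 (* 32 *) NAdd 4 4 5 :: NConst 6 (8+K) :: NJle 6 4 36 :: Jmp 37 :: NConst 4 8 ::
 (* 37 *) NLoad 6 4 :: NConst 7 m :: NAdd 6 6 7 :: NJle 6 0 42 :: Jmp 44 ::
 (* 42 *) NCopy 1 4 :: NSub 3 3 5 ::
 (* 44 *) NLoad 4 1 :: NConst 7 m :: NAdd 4 4 7 :: NJle 4 0 49 :: OutNo ::
 (* 49 *) RLoad 2 1 :: RDiv 3 0 2 :: OutNum 3 ::
 (* 52 *) NConst 1 8 :: NConst 2 8 :: NConst 3 1 :: NCopy 8 0 :: RConst 8 1 :: RConst 0 1 :: Jmp 44 ::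
 (* 59 *) NConst 1 8 :: NConst 2 8 :: NConst 3 1 :: NConst 8 0 :: RConst 8 1 :: RConst 0 1 :: Jmp 2 :: nil.

Open Scope nat_scope.

Lemma mod_red x K : K <= x < 2 * K -> x mod K = x - K.
Proof. intros H. symmetry. apply (Nat.mod_unique _ _ 1); lia. Qed.

Lemma mod_shift a i K : 0 < K -> i < K ->
  (a + i) mod K = if a mod K + i <? K then a mod K + i else a mod K + i - K.
Proof.
  intros HK Hi. rewrite <- Nat.Div0.add_mod_idemp_l.
  pose proof (Nat.mod_upper_bound a K ltac:(lia)).
  destruct (Nat.ltb_spec (a mod K + i) K).
  - apply Nat.mod_small; lia.
  - apply mod_red; lia.
Qed.

Lemma addr_lt K j : 0 < K -> addr K j < 8 + K.
Proof. intros. unfold addr. pose proof (Nat.mod_upper_bound j K ltac:(lia)). lia. Qed.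

Lemma addr_0 K : 0 < K -> addr K 0 = 8.
Proof. intros. unfold addr. rewrite Nat.Div0.mod_0_l. lia. Qed.

Lemma addr_S K j : 0 < K ->
  addr K (j + 1) = if Nat.leb (8 + K) (addr K j + 1) then 8 else addr K j + 1.
Proof.
  intros HK. unfold addr.
  pose proof (Nat.mod_upper_bound j K ltac:(lia)).
  destruct (Nat.eq_dec K 1) as [->|HK1].
  - rewrite !Nat.mod_1_r. reflexivity.
  - rewrite (mod_shift j 1 K) by lia.
    destruct (Nat.ltb_spec (j mod K + 1) K); destruct (Nat.leb_spec (8 + K) (8 + j mod K + 1)); lia.
Qed.

Lemma addr_inj K a i j : 0 < K -> i < K -> j < K -> addr K (a + i) = addr K (a + j) -> i = j.
Proof.
  intros HK Hi Hj H. unfold addr in H.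
  rewrite (mod_shift a i K), (mod_shift a j K) in H by lia.
  pose proof (Nat.mod_upper_bound a K ltac:(lia)).
  destruct (Nat.ltb_spec (a mod K + i) K); destruct (Nat.ltb_spec (a mod K + j) K); lia.
Qed.

Lemma addr_shift K a i : addr K (a + 1 + i) = addr K (a + (1 + i)).
Proof. f_equal; lia. Qed.

Lemma addr_K K a : 0 < K -> addr K (a + K) = addr K a.
Proof. intros. unfold addr. rewrite <- Nat.Div0.add_mod_idemp_r, Nat.Div0.mod_same, Nat.add_0_r. reflexivity. Qed.
Close Scope nat_scope.

Lemma prodR_split f a n p : prodR f a (n + p) = prodR f a n * prodR f (a+n) p.
Proof.
  induction p as [|p IH].
  - rewrite Nat.add_0_r. simpl. ring.
  - rewrite Nat.add_succ_r. simpl. rewrite IH.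
    replace (a + (n + p))%nat with (a + n + p)%nat by lia. ring.
Qed.

Lemma prodR_nonneg f a n : (forall i, 0 <= f i) -> 0 <= prodR f a n.
Proof. intros H. induction n; simpl. lra. apply Rmult_le_pos; auto. Qed.

Lemma prodR_le1 f a n : (forall i, 0 <= f i <= 1) -> prodR f a n <= 1.
Proof.
  intros H. induction n; simpl. lra.
  pose proof (prodR_nonneg f a n (fun i => proj1 (H i))). destruct (H (a+n)%nat).
  replace 1 with (1*1) by ring. apply Rmult_le_compat; lra.
Qed.

Lemma prodR_pos f a n : (forall i, (a <= i < a + n)%nat -> 0 < f i) -> 0 < prodR f a n.
Proof.
  intros H. induction n; simpl. lra.
  apply Rmult_lt_0_compat. apply IHn; intros; apply H; lia. apply H; lia.
Qed.

Lemma prodR_zero f a n i : (a <= i < a + n)%nat -> f i = 0 -> prodR f a n = 0.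
Proof.
  intros Hi Hf. induction n; [lia|]. simpl.
  destruct (Nat.eq_dec i (a+n)) as [->|Hne]. rewrite Hf; ring.
  rewrite IHn by lia. ring.
Qed.

Definition Q (xs : nat -> R) (Z j : nat) : R := prodR xs Z (j - Z).

Lemma Q_S xs Z j : (Z <= j)%nat -> Q xs Z (S j) = Q xs Z j * xs j.
Proof.
  intros H. unfold Q. replace (S j - Z)%nat with (S (j - Z)) by lia. simpl.
  replace (Z + (j - Z))%nat with j by lia. reflexivity.
Qed.

Lemma Q_self xs Z : Q xs Z Z = 1.
Proof. unfold Q. rewrite Nat.sub_diag. reflexivity. Qed.

Lemma Q_split xs Z s m : (Z <= s)%nat -> Q xs Z (s + m) = Q xs Z s * prodR xs s m.
Proof.
  intros H. unfold Q. replace (s + m - Z)%nat with ((s - Z) + m)%nat by lia.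
  rewrite prodR_split. replace (Z + (s - Z))%nat with s by lia. reflexivity.
Qed.

Lemma Q_mono xs Z j j' : (forall i, 0 <= xs i <= 1) -> (Z <= j <= j')%nat -> Q xs Z j' <= Q xs Z j.
Proof.
  intros H Hj. replace j' with (j + (j' - j))%nat by lia. rewrite Q_split by lia.
  pose proof (prodR_le1 xs j (j'-j) H).
  assert (0 <= Q xs Z j) by (apply prodR_nonneg; intro i; apply H).
  assert (0 <= prodR xs j (j'-j)) by (apply prodR_nonneg; intro i; apply H).
  nra.
Qed.

Lemma Q_nonneg xs Z j : (forall i, 0 <= xs i <= 1) -> 0 <= Q xs Z j.
Proof. intros H. apply prodR_nonneg; intro i; apply H. Qed.

Lemma Q_pos xs Z j q : (forall i, (Z <= i < q)%nat -> 0 < xs i) -> (j <= q)%nat -> 0 < Q xs Z j.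
Proof. intros H Hj. apply prodR_pos. intros i Hi. apply H. lia. Qed.
Arguments addr : simpl never.

Lemma addr_ltb K j : (0 < K)%nat -> Nat.ltb (addr K j) (S (S (S (S (S (S (S (S K)))))))) = true.
Proof. intros. apply Nat.ltb_lt. pose proof (addr_lt K j H). lia. Qed.

Lemma addr_ge K j : (8 <= addr K j)%nat.
Proof. unfold addr. lia. Qed.

Lemma addr_eqb_l K j a : (a < 8)%nat -> Nat.eqb (addr K j) a = false.
Proof. intros. apply Nat.eqb_neq. pose proof (addr_ge K j). lia. Qed.
Lemma addr_eqb_r K j a : (a < 8)%nat -> Nat.eqb a (addr K j) = false.
Proof. intros. apply Nat.eqb_neq. pose proof (addr_ge K j). lia. Qed.

Definition Ev M K hl i := nreg M (addr K (hl + i)).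
Definition Vv M K hl i := rreg M (addr K (hl + i)).

Definition InvR (strict : bool) (c : R) (m K : nat) (xs : nat -> R) (q : nat) (M : mem) (hl k Z : nat) : Prop :=
  nreg M 0 = q /\ nreg M 1 = addr K hl /\ nreg M 2 = addr K (hl + (k - 1)) /\ nreg M 3 = k /\
  (1 <= k <= K)%nat /\
  (Z <= q)%nat /\ (Z = 0%nat \/ xs (Z - 1)%nat = 0) /\ (forall i, (Z <= i < q)%nat -> 0 < xs i) /\
  rreg M 0 = Q xs Z q /\
  (forall i, (i < k)%nat -> (Z <= Ev M K hl i <= q)%nat /\ Vv M K hl i = Q xs Z (Ev M K hl i)) /\
  (forall i, (i + 1 < k)%nat -> (Ev M K hl i < Ev M K hl (i+1))%nat /\
      Q xs Z (Ev M K hl (i+1)) < c * Q xs Z (Ev M K hl i) /\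
      forall j, (Ev M K hl i <= j < Ev M K hl (i+1))%nat -> c * Q xs Z (Ev M K hl i) <= Q xs Z j) /\
  (forall j, (Ev M K hl (k-1) <= j <= q)%nat -> c * Q xs Z (Ev M K hl (k-1)) <= Q xs Z j) /\
  (forall i, (1 <= i < k)%nat -> if strict then (q < Ev M K hl i + m)%nat else (q <= Ev M K hl i + m)%nat) /\
  ((q < Ev M K hl 0 + m)%nat -> Ev M K hl 0 = Z \/ k = K).

Definition InvG (strict : bool) (c : R) (m K : nat) (xs : nat -> R) (q : nat) (M : mem) : Prop :=
  exists hl k Z : nat, InvR strict c m K xs q M hl k Z.


Lemma InvR_frame s c m K xs q M M' hl k Z :
  InvR s c m K xs q M hl k Z ->
  (forall a, (a <= 3 \/ 8 <= a)%nat -> nreg M' a = nreg M a) ->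
  (forall a, (a = 0 \/ 8 <= a)%nat -> rreg M' a = rreg M a) ->
  InvR s c m K xs q M' hl k Z.
Proof.
  intros H Hn Hr.
  assert (HE : forall hl, Ev M' K hl = Ev M K hl).
  { intro h. extensionality i. unfold Ev. apply Hn. right; apply addr_ge. }
  assert (HV : forall hl, Vv M' K hl = Vv M K hl).
  { intro h. extensionality i. unfold Vv. apply Hr. right; apply addr_ge. }
  unfold InvR. rewrite HE, HV, (Hn 0%nat), (Hn 1%nat), (Hn 2%nat), (Hn 3%nat), (Hr 0%nat) by lia.
  exact H.
Qed.

Lemma InvG_frame s c m K xs q M M' :
  InvG s c m K xs q M ->
  (forall a, (a <= 3 \/ 8 <= a)%nat -> nreg M' a = nreg M a) ->
  (forall a, (a = 0 \/ 8 <= a)%nat -> rreg M' a = rreg M a) ->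
  InvG s c m K xs q M'.
Proof. intros (hl & k & Z & H) Hn Hr. exists hl, k, Z. eapply InvR_frame; eauto. Qed.
Lemma goes_refl sp P x a M : goes sp P x a M a M 0.
Proof. intro f; reflexivity. Qed.
Lemma goes_n sp P x a M b M' n n' : goes sp P x a M b M' n -> n = n' -> goes sp P x a M b M' n'.
Proof. intros H ->; exact H. Qed.
Lemma goes_mem sp P x a M b M1 M2 n : goes sp P x a M b M1 n -> M1 = M2 -> goes sp P x a M b M2 n.
Proof. intros H ->; exact H. Qed.

Lemma wrap_ok c m K x a p M j : (0 < K)%nat -> (p < 8)%nat -> p <> 6%nat ->
  nth_error (prog c m K) a = Some (NAdd p p 5) ->
  nth_error (prog c m K) (S a) = Some (NConst 6 (8+K)) ->
  nth_error (prog c m K) (S (S a)) = Some (NJle 6 p (a+4)) ->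
  nth_error (prog c m K) (S (S (S a))) = Some (Jmp (a+5)) ->
  nth_error (prog c m K) (a+4) = Some (NConst p 8) ->
  nreg M 5 = 1%nat -> nreg M p = addr K j ->
  goes (8+K) (prog c m K) x a M (a+5) (setn (setn M p (addr K (j+1))) 6 (8+K)) 4.
Proof.
  intros HK Hp Hp6 N0 N1 N2 N3 N4 H5 Hpj.
  assert (Hacc : forall l, (forall y, In y l -> (y < 8 + K)%nat) -> forallb (fun a => Nat.ltb a (8+K)) l = true).
  { intros l Hl. apply forallb_forall. intros y Hy. apply Nat.ltb_lt. auto. }
  assert (Hpp : (p =? p)%nat = true) by apply Nat.eqb_refl.
  assert (Hp6' : (p =? 6)%nat = false) by (apply Nat.eqb_neq; exact Hp6).
  pose proof (addr_S K j HK) as HS.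
  destruct (Nat.leb (8+K) (addr K j + 1)) eqn:Hw.
  - change 4%nat with (1+(1+(1+(1+0))))%nat. eapply goes_mem.
    + eapply goes_trans. eapply goes_step; [exact N0 | apply Hacc; cbn; intros y Hy; repeat destruct Hy as [<-|Hy]; lia | cbn; reflexivity].
      eapply goes_trans. eapply goes_step; [exact N1 | apply Hacc; cbn; intros y Hy; repeat destruct Hy as [<-|Hy]; lia | cbn; reflexivity].
      eapply goes_trans. eapply goes_step; [exact N2 | apply Hacc; cbn; intros y Hy; repeat destruct Hy as [<-|Hy]; lia | cbv [step setn upd]; cbn [nreg rreg Nat.eqb]; rewrite Hp6', Hpp, H5, Hpj; change (8 + K)%nat with (S (S (S (S (S (S (S (S K)))))))) in Hw; rewrite Hw; reflexivity].
      eapply goes_trans. eapply goes_step; [exact N4 | apply Hacc; cbn; intros y Hy; repeat destruct Hy as [<-|Hy]; lia | cbn; reflexivity].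
      replace (S (a + 4))%nat with (a + 5)%nat by lia. apply goes_refl.
    + unfold setn. cbn. f_equal. extensionality i. unfold upd. rewrite HS.
      destruct (Nat.eqb_spec i p), (Nat.eqb_spec i 6); try reflexivity; lia.
  - change 4%nat with (1+(1+(1+(1+0))))%nat. eapply goes_mem.
    + eapply goes_trans. eapply goes_step; [exact N0 | apply Hacc; cbn; intros y Hy; repeat destruct Hy as [<-|Hy]; lia | cbn; reflexivity].
      eapply goes_trans. eapply goes_step; [exact N1 | apply Hacc; cbn; intros y Hy; repeat destruct Hy as [<-|Hy]; lia | cbn; reflexivity].
      eapply goes_trans. eapply goes_step; [exact N2 | apply Hacc; cbn; intros y Hy; repeat destruct Hy as [<-|Hy]; lia | cbv [step setn upd]; cbn [nreg rreg Nat.eqb]; rewrite Hp6', Hpp, H5, Hpj; change (8 + K)%nat with (S (S (S (S (S (S (S (S K)))))))) in Hw; rewrite Hw; reflexivity].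
      eapply goes_trans. eapply goes_step; [exact N3 | apply Hacc; cbn; intros y Hy; repeat destruct Hy as [<-|Hy]; lia | cbn; reflexivity].
      apply goes_refl.
    + unfold setn. cbn. f_equal. extensionality i. unfold upd. rewrite HS.
      destruct (Nat.eqb_spec i p), (Nat.eqb_spec i 6); try reflexivity; lia.
Qed.

Lemma incr_lt (g : nat -> nat) k : (forall i, (i + 1 < k)%nat -> (g i < g (i+1))%nat) ->
  forall i j, (i < j)%nat -> (j < k)%nat -> (g i < g j)%nat.
Proof.
  intros H i j. induction j as [|j IH]; intros Hij Hjk; [lia|].
  destruct (Nat.eq_dec i j) as [->|Hne].
  - replace (S j) with (j+1)%nat by lia. apply H. lia.
  - specialize (IH ltac:(lia) ltac:(lia)). specialize (H j ltac:(lia)). replace (S j) with (j+1)%nat by lia. lia.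
Qed.

Lemma trans_nopop c m K xs q M hl k Z :
  InvR false c m K xs q M hl k Z -> (k = 1%nat \/ (2 <= k)%nat /\ (q < Ev M K hl 1 + m)%nat) ->
  InvR true c m K xs q M hl k Z.
Proof.
  intros (H0 & H1 & H2 & H3 & Hk & HZq & HZ0 & Hpos & HP & Hd & He & Hf & Hg & Hh) Hc.
  unfold InvR. repeat (split; [assumption|]). split; [|assumption].
  intros i Hi. destruct Hc as [->|[Hk2 Hq]]; [lia|].
  destruct (Nat.eq_dec i 1) as [->|Hi1]; [exact Hq|].
  pose proof (incr_lt (Ev M K hl) k (fun i Hi => proj1 (He i Hi)) 1 i ltac:(lia) ltac:(lia)). lia.
Qed.

Lemma trans_pop c m K xs q M M' hl k Z :
  InvR false c m K xs q M hl k Z -> (2 <= k)%nat -> (Ev M K hl 1 + m <= q)%nat ->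
  nreg M' 0 = nreg M 0 -> nreg M' 1 = addr K (hl + 1) -> nreg M' 2 = nreg M 2 -> nreg M' 3 = (k - 1)%nat ->
  rreg M' 0 = rreg M 0 -> (forall a, (8 <= a)%nat -> nreg M' a = nreg M a /\ rreg M' a = rreg M a) ->
  InvR true c m K xs q M' (hl + 1) (k - 1) Z.
Proof.
  intros (H0 & H1 & H2 & H3 & Hk & HZq & HZ0 & Hpos & HP & Hd & He & Hf & Hg & Hh) Hk2 Hc
    N0 N1 N2 N3 R0 N8.
  assert (HE : Ev M' K (hl + 1) = fun i => Ev M K hl (i + 1)).
  { extensionality i. unfold Ev. rewrite (proj1 (N8 _ (addr_ge K _))). f_equal. f_equal. lia. }
  assert (HV : Vv M' K (hl + 1) = fun i => Vv M K hl (i + 1)).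
  { extensionality i. unfold Vv. rewrite (proj2 (N8 _ (addr_ge K _))). f_equal. f_equal. lia. }
  unfold InvR. rewrite HE, HV. cbn beta.
  rewrite N0, N1, N2, N3, R0.
  split; [assumption|]. split; [reflexivity|].
  split; [rewrite H2; f_equal; lia|]. split; [reflexivity|]. split; [lia|].
  split; [assumption|]. split; [assumption|]. split; [assumption|]. split; [assumption|].
  split. { intros i Hi. apply Hd. lia. }
  split. { intros i Hi. replace (i + 1 + 1)%nat with ((i+1)+1)%nat by lia. apply He. lia. }
  split. { replace (k - 1 - 1 + 1)%nat with (k - 1)%nat by lia. exact Hf. }
  split.
  { intros i Hi. specialize (Hg 1%nat ltac:(lia)). cbn in Hg.
    pose proof (incr_lt (Ev M K hl) k (fun i Hi => proj1 (He i Hi)) 1 (i+1) ltac:(lia) ltac:(lia)). lia. }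
  intros Hq. cbn in Hq. lia.
Qed.

Lemma trans_reset c m K xs q M' :
  0 < c < 1 -> (0 < K)%nat -> xs q = 0 ->
  nreg M' 0 = S q -> nreg M' 1 = 8%nat -> nreg M' 2 = 8%nat -> nreg M' 3 = 1%nat ->
  nreg M' 8 = S q -> rreg M' 8 = 1 -> rreg M' 0 = 1 ->
  InvR true c m K xs (S q) M' 0 1 (S q).
Proof.
  intros Hc HK Hx N0 N1 N2 N3 N8 R8 R0.
  assert (A0 : addr K 0 = 8%nat) by (apply addr_0; exact HK).
  unfold InvR, Ev, Vv. cbn [Nat.sub Nat.add]. rewrite ?A0.
  rewrite N0, N1, N2, N3, ?N8, ?R8, R0, ?Q_self.
  split; [reflexivity|]. split; [reflexivity|]. split; [reflexivity|].
  split; [reflexivity|]. split; [lia|]. split; [lia|].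
  split; [right; replace (q - 0)%nat with q by lia; exact Hx|].
  split; [intros; lia|]. split; [reflexivity|].
  split; [intros i Hi; replace i with 0%nat by lia; rewrite A0, N8, R8, Q_self; split; [lia|reflexivity]|].
  split; [intros; lia|]. split.
  { intros j Hj. replace j with (S q) by lia. rewrite Q_self. lra. }
  split; [intros; lia|]. intros _; left; reflexivity.
Qed.

Lemma trans_noapp c m K xs q M M' hl k Z :
  0 < c -> (forall i, 0 <= xs i <= 1) -> 0 < xs q ->
  InvR true c m K xs q M hl k Z ->
  nreg M' 0 = S q -> nreg M' 1 = nreg M 1 -> nreg M' 2 = nreg M 2 -> nreg M' 3 = nreg M 3 ->
  rreg M' 0 = rreg M 0 * xs q -> (forall a, (8 <= a)%nat -> nreg M' a = nreg M a /\ rreg M' a = rreg M a) ->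
  Vv M K hl (k - 1) * c <= rreg M 0 * xs q ->
  InvR false c m K xs (S q) M' hl k Z.
Proof.
  intros Hc Hxs Hx (H0 & H1 & H2 & H3 & Hk & HZq & HZ0 & Hpos & HP & Hd & He & Hf & Hg & Hh)
    N0 N1 N2 N3 R0 N8 Hcond.
  assert (HE : Ev M' K hl = Ev M K hl).
  { extensionality i. unfold Ev. apply (N8 _ (addr_ge K _)). }
  assert (HV : Vv M' K hl = Vv M K hl).
  { extensionality i. unfold Vv. apply (N8 _ (addr_ge K _)). }
  assert (HQS : Q xs Z (S q) = rreg M 0 * xs q) by (rewrite Q_S by lia; rewrite HP; reflexivity).
  unfold InvR. rewrite HE, HV, N0, N1, N2, N3, R0, H1, H2, H3.
  split; [reflexivity|]. split; [reflexivity|]. split; [reflexivity|]. split; [reflexivity|].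
  split; [lia|]. split; [lia|]. split; [assumption|].
  split. { intros i Hi. destruct (Nat.eq_dec i q) as [->|Hne]; [exact Hx|]. apply Hpos. lia. }
  split; [symmetry; exact HQS|].
  split. { intros i Hi. destruct (Hd i Hi). split; [lia|assumption]. }
  split; [exact He|].
  split.
  { intros j Hj. destruct (Nat.eq_dec j (S q)) as [->|Hne].
    - rewrite HQS. destruct (Hd (k-1)%nat ltac:(lia)) as [_ HVk]. rewrite <- HVk. lra.
    - apply Hf. lia. }
  split. { intros i Hi. specialize (Hg i Hi). cbn in Hg |- *. lia. }
  intros Hq. apply Hh. lia.
Qed.

Lemma trans_app c m K xs q M M' hl k Z :
  0 < c < 1 -> (forall i, 0 <= xs i <= 1) -> 0 < xs q -> (k < K)%nat ->
  InvR true c m K xs q M hl k Z ->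
  nreg M' 0 = S q -> nreg M' 1 = nreg M 1 -> nreg M' 2 = addr K (hl + k) -> nreg M' 3 = S k ->
  rreg M' 0 = rreg M 0 * xs q ->
  nreg M' (addr K (hl + k)) = S q -> rreg M' (addr K (hl + k)) = rreg M 0 * xs q ->
  (forall a, (8 <= a)%nat -> a <> addr K (hl + k) -> nreg M' a = nreg M a /\ rreg M' a = rreg M a) ->
  rreg M 0 * xs q < Vv M K hl (k - 1) * c ->
  InvR false c m K xs (S q) M' hl (S k) Z.
Proof.
  intros Hc Hxs Hx HkK (H0 & H1 & H2 & H3 & Hk & HZq & HZ0 & Hpos & HP & Hd & He & Hf & Hg & Hh)
    N0 N1 N2 N3 R0 Nw Rw N8 Hcond.
  assert (HE : forall i, (i < k)%nat -> Ev M' K hl i = Ev M K hl i /\ Vv M' K hl i = Vv M K hl i).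
  { intros i Hi. unfold Ev, Vv. apply N8; [apply addr_ge|].
    intro Heq. apply addr_inj in Heq; lia. }
  assert (HEk : Ev M' K hl k = S q) by exact Nw.
  assert (HVk : Vv M' K hl k = rreg M 0 * xs q) by exact Rw.
  assert (HQS : Q xs Z (S q) = rreg M 0 * xs q) by (rewrite Q_S by lia; rewrite HP; reflexivity).
  assert (HQn : 0 <= Q xs Z (S q)) by (apply Q_nonneg; exact Hxs).
  unfold InvR. rewrite N0, N1, N2, N3, R0, H1.
  split; [reflexivity|]. split; [reflexivity|]. split; [f_equal; lia|]. split; [reflexivity|].
  split; [lia|]. split; [lia|]. split; [assumption|].
  split. { intros i Hi. destruct (Nat.eq_dec i q) as [->|Hne]; [exact Hx|]. apply Hpos. lia. }
  split; [symmetry; exact HQS|].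
  split.
  { intros i Hi. destruct (Nat.eq_dec i k) as [->|Hne].
    - rewrite HEk, HVk, HQS. split; [lia|reflexivity].
    - destruct (HE i ltac:(lia)) as [-> ->]. destruct (Hd i ltac:(lia)). split; [lia|assumption]. }
  split.
  { intros i Hi. destruct (Nat.eq_dec (i+1) k) as [Hik|Hne].
    - rewrite Hik, HEk. destruct (HE i ltac:(lia)) as [-> _].
      replace i with (k-1)%nat by lia.
      destruct (Hd (k-1)%nat ltac:(lia)) as [Hb HVe].
      split; [lia|]. split.
      + rewrite HQS, <- HVe. lra.
      + intros j Hj. apply Hf. lia.
    - destruct (HE i ltac:(lia)) as [-> _]. destruct (HE (i+1)%nat ltac:(lia)) as [-> _].
      apply He. lia. }
  split.
  { replace (S k - 1)%nat with k by lia. rewrite HEk. intros j Hj. replace j with (S q) by lia. nra. }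
  split.
  { intros i Hi. destruct (Nat.eq_dec i k) as [->|Hne].
    - rewrite HEk. lia.
    - destruct (HE i ltac:(lia)) as [-> _]. specialize (Hg i ltac:(lia)). cbn in Hg. lia. }
  intros Hq. destruct (HE 0%nat ltac:(lia)) as [HE0 _]. rewrite HE0 in Hq |- *.
  destruct (Hh ltac:(lia)) as [Hh'|Hh']; [left; exact Hh'|lia].
Qed.

Lemma trans_ovf c m K xs q M M' hl Z :
  0 < c < 1 -> (forall i, 0 <= xs i <= 1) -> 0 < xs q -> (2 <= K)%nat ->
  InvR true c m K xs q M hl K Z ->
  nreg M' 0 = S q -> nreg M' 1 = addr K (hl + 1) -> nreg M' 2 = addr K (hl + K) -> nreg M' 3 = K ->
  rreg M' 0 = rreg M 0 * xs q ->
  nreg M' (addr K (hl + K)) = S q -> rreg M' (addr K (hl + K)) = rreg M 0 * xs q ->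
  (forall a, (8 <= a)%nat -> a <> addr K (hl + K) -> nreg M' a = nreg M a /\ rreg M' a = rreg M a) ->
  rreg M 0 * xs q < Vv M K hl (K - 1) * c ->
  InvR false c m K xs (S q) M' (hl + 1) K Z.
Proof.
  intros Hc Hxs Hx HK (H0 & H1 & H2 & H3 & Hk & HZq & HZ0 & Hpos & HP & Hd & He & Hf & Hg & Hh)
    N0 N1 N2 N3 R0 Nw Rw N8 Hcond.
  assert (HE : forall i, (i + 1 < K)%nat -> Ev M' K (hl + 1) i = Ev M K hl (i + 1) /\ Vv M' K (hl + 1) i = Vv M K hl (i + 1)).
  { intros i Hi. unfold Ev, Vv. replace (hl + 1 + i)%nat with (hl + (i + 1))%nat by lia.
    apply N8; [apply addr_ge|].
    intro Heq. rewrite addr_K in Heq by lia. rewrite <- (Nat.add_0_r hl) in Heq at 2.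
    apply addr_inj in Heq; lia. }
  assert (HEk : Ev M' K (hl + 1) (K - 1) = S q).
  { unfold Ev. replace (hl + 1 + (K - 1))%nat with (hl + K)%nat by lia. exact Nw. }
  assert (HVk : Vv M' K (hl + 1) (K - 1) = rreg M 0 * xs q).
  { unfold Vv. replace (hl + 1 + (K - 1))%nat with (hl + K)%nat by lia. exact Rw. }
  assert (HQS : Q xs Z (S q) = rreg M 0 * xs q) by (rewrite Q_S by lia; rewrite HP; reflexivity).
  assert (HQn : 0 <= Q xs Z (S q)) by (apply Q_nonneg; exact Hxs).
  unfold InvR. rewrite N0, N1, N2, N3, R0.
  split; [reflexivity|]. split; [reflexivity|]. split; [f_equal; lia|]. split; [reflexivity|].
  split; [lia|]. split; [lia|]. split; [assumption|].
  split. { intros i Hi. destruct (Nat.eq_dec i q) as [->|Hne]; [exact Hx|]. apply Hpos. lia. }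
  split; [symmetry; exact HQS|].
  split.
  { intros i Hi. destruct (Nat.eq_dec i (K-1)) as [->|Hne].
    - rewrite HEk, HVk, HQS. split; [lia|reflexivity].
    - destruct (HE i ltac:(lia)) as [-> ->]. destruct (Hd (i+1)%nat ltac:(lia)). split; [lia|assumption]. }
  split.
  { intros i Hi. destruct (Nat.eq_dec (i+1) (K-1)) as [Hik|Hne].
    - rewrite Hik, HEk. destruct (HE i ltac:(lia)) as [-> _].
      replace (i+1)%nat with (K-1)%nat by lia.
      destruct (Hd (K-1)%nat ltac:(lia)) as [Hb HVe].
      split; [lia|]. split.
      + rewrite HQS, <- HVe. lra.
      + intros j Hj. apply Hf. lia.
    - destruct (HE i ltac:(lia)) as [-> _]. destruct (HE (i+1)%nat ltac:(lia)) as [-> _].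
      apply He. lia. }
  split.
  { rewrite HEk. intros j Hj. replace j with (S q) by lia. nra. }
  split.
  { intros i Hi. destruct (Nat.eq_dec i (K-1)) as [->|Hne].
    - rewrite HEk. lia.
    - destruct (HE i ltac:(lia)) as [-> _]. specialize (Hg (i+1)%nat ltac:(lia)). cbn in Hg. lia. }
  intros _. right. reflexivity.
Qed.

Ltac rwf := repeat match goal with H : nreg _ _ = addr _ _ |- _ => rewrite H end.
Ltac acc := apply forallb_forall; intros ? Hin; apply Nat.ltb_lt; cbn in Hin;
  repeat (destruct Hin as [<-|Hin]; [ first [ lia | (rwf; apply addr_lt; lia) ] | ]); contradiction.
Ltac st := eapply goes_trans; [ eapply goes_step; [ reflexivity | acc | cbn; reflexivity ] | ].
Ltac fin := apply goes_refl.
Ltac frame1 := intros ?a ?Ha; cbn; unfold upd; repeat match goal with |- context [Nat.eqb ?x ?y] => destruct (Nat.eqb_spec x y); [lia|] end; reflexivity.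
Ltac frame8 := intros ?a ?Ha; cbn; unfold upd; repeat match goal with |- context [Nat.eqb ?x ?y] => destruct (Nat.eqb_spec x y); [lia|] end; split; reflexivity.

Lemma pop_ok c m K xs q M x : (2 <= K)%nat ->
  InvG false c m K xs q M ->
  exists M' n, (n <= 20)%nat /\ goes (8+K) (prog c m K) x 29 M 44 M' n /\ InvG true c m K xs q M'.
Proof.
  intros HK (hl & k & Z & HI).
  pose proof HI as (H0 & H1 & H2 & H3 & Hk & _).
  destruct (Nat.leb k 1) eqn:Hk1.
  - apply Nat.leb_le in Hk1.
    assert (Hk1' : Nat.leb k 1 = true) by (apply Nat.leb_le; lia).
    eassert (Hgo : goes (8+K) (prog c m K) x 29 M 44 _ _).
    { st. eapply goes_trans; [ eapply goes_step; [ reflexivity | acc | cbn; rewrite H3, Hk1'; reflexivity ] | ].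
      fin. }
    match type of Hgo with goes _ _ _ _ _ _ _ ?N => eexists; exists N end.
    split; [cbn; lia|]. split; [exact Hgo|].
    exists hl, k, Z. eapply InvR_frame; [apply trans_nopop; [exact HI| left; lia] | frame1 | frame1].
  - apply Nat.leb_gt in Hk1.
    assert (Hk1' : Nat.leb k 1 = false) by (apply Nat.leb_gt; lia).
    destruct (Nat.leb (nreg M (addr K (hl + 1)) + m) q) eqn:Hc.
    + eassert (Hgo : goes (8+K) (prog c m K) x 29 M 44 _ _).
      { st. eapply goes_trans; [ eapply goes_step; [ reflexivity | acc | cbn; rewrite H3, Hk1'; reflexivity ] | ].
        st.
        eapply goes_trans; [ eapply (wrap_ok c m K x 32 4 _ hl); [lia|lia|lia|reflexivity|reflexivity|reflexivity|reflexivity|reflexivity| cbn; reflexivity | cbn; exact H1] | ].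
        cbn [Nat.add].
        eapply goes_trans; [ eapply goes_step; [ reflexivity | acc | cbn; reflexivity ] | ].
        st. st.
        eapply goes_trans; [ eapply goes_step; [ reflexivity | acc | cbn; unfold upd at 1 2 3 4; rewrite !addr_eqb_l by lia; rewrite H0, Hc; reflexivity ] | ].
        st. st. fin. }
      match type of Hgo with goes _ _ _ _ _ _ _ ?N => eexists; exists N end.
      split; [cbn; lia|]. split; [exact Hgo|].
      exists (hl + 1)%nat, (k - 1)%nat, Z. apply Nat.leb_le in Hc.
      eapply trans_pop; [exact HI| lia | exact Hc | cbn; reflexivity | cbn; reflexivity | cbn; reflexivity | cbn; rewrite H3; reflexivity | cbn; reflexivity | frame8 ].
    + eassert (Hgo : goes (8+K) (prog c m K) x 29 M 44 _ _).
      { st. eapply goes_trans; [ eapply goes_step; [ reflexivity | acc | cbn; rewrite H3, Hk1'; reflexivity ] | ].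
        st.
        eapply goes_trans; [ eapply (wrap_ok c m K x 32 4 _ hl); [lia|lia|lia|reflexivity|reflexivity|reflexivity|reflexivity|reflexivity| cbn; reflexivity | cbn; exact H1] | ].
        cbn [Nat.add].
        eapply goes_trans; [ eapply goes_step; [ reflexivity | acc | cbn; reflexivity ] | ].
        st. st.
        eapply goes_trans; [ eapply goes_step; [ reflexivity | acc | cbn; unfold upd at 1 2 3 4; rewrite !addr_eqb_l by lia; rewrite H0, Hc; reflexivity ] | ].
        st. fin. }
      match type of Hgo with goes _ _ _ _ _ _ _ ?N => eexists; exists N end.
      split; [cbn; lia|]. split; [exact Hgo|].
      exists hl, k, Z. apply Nat.leb_gt in Hc.
      eapply InvR_frame; [apply trans_nopop; [exact HI| right; split; [lia|unfold Ev; exact Hc]] | frame1 | frame1].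
Qed.
Definition spec (c z : R) (xs : nat -> R) (q m : nat) (o : result) : Prop :=
  match o with
  | ResNum v => c * prodR xs (q - m) m <= v /\ v <= prodR xs (q - m) m
  | ResNo => prodR xs (q - m) m <= c / z
  | ResNone => False
  end.

Lemma chain (g : nat -> R) c k : 0 <= c -> (forall i, (i + 1 < k)%nat -> g (i+1)%nat < c * g i) ->
  forall i, (i < k)%nat -> g i <= c ^ i * g 0%nat.
Proof.
  intros Hc H. induction i as [|i IH]; intros Hi.
  - simpl. lra.
  - replace (S i) with (i+1)%nat by lia. specialize (H i ltac:(lia)). specialize (IH ltac:(lia)).
    apply Rmult_le_compat_l with (r := c) in IH; [|lra]. simpl. rewrite <- Rmult_assoc in IH. replace (S i) with (i+1)%nat by lia. replace (c^(i+1)) with (c * c^i) by (rewrite Nat.add_1_r; simpl; ring). lra.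
Qed.


Lemma out_ok (c z : R) m K xs q M :
  0 < c < 1 -> 0 < z -> (1 <= m)%nat -> (2 <= K)%nat -> (forall i, 0 <= xs i <= 1) -> c ^ (K-1) <= c / z ->
  InvG true c m K xs q M ->
  exists o M' n, (n <= 10)%nat /\ (forall f x, exec (n + f) (8+K) (prog c m K) x 44 M = Some (o, M')) /\
     InvG true c m K xs q M' /\ ((m <= q)%nat -> spec c z xs q m o).
Proof.
  intros Hc Hz Hm HK Hxs HcK HI.
  pose proof HI as (hl & k & Z & H0 & H1 & H2 & H3 & Hk & HZq & HZ0 & Hpos & HP & Hd & He & Hf & Hg & Hh).
  assert (HE0 : Ev M K hl 0 = nreg M (addr K hl)) by (unfold Ev; rewrite Nat.add_0_r; reflexivity).
  assert (HV0 : Vv M K hl 0 = rreg M (addr K hl)) by (unfold Vv; rewrite Nat.add_0_r; reflexivity).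
  destruct (Hd 0%nat ltac:(lia)) as [HE0b HV0e].
  assert (HQE0 : 0 < Q xs Z (Ev M K hl 0)) by (apply (Q_pos _ _ _ q); [exact Hpos| lia]).
  destruct (Nat.leb (nreg M (addr K hl) + m) q) eqn:Hc1.
  - apply Nat.leb_le in Hc1.
    assert (Hc1' : (nreg M (addr K hl) + m <=? q)%nat = true) by (apply Nat.leb_le; exact Hc1).
    assert (Hr : rreg M (addr K hl) <> 0) by (rewrite <- HV0, HV0e; lra).
    eassert (Hgo : forall x, goes (8+K) (prog c m K) x 44 M 51 _ _).
    { intro x. st. st. st. eapply goes_trans; [ eapply goes_step; [ reflexivity | acc | cbn; rewrite H0, H1, Hc1'; reflexivity ] | ].
      st. eapply goes_trans; [ eapply goes_step; [ reflexivity | acc | cbn; rewrite H1; destruct (Req_EM_T _ 0); [contradiction|reflexivity] ] | ].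
      fin. }
    match type of Hgo with forall x, goes _ _ _ _ _ _ _ ?N => eexists; eexists; exists (S N) end.
    split; [cbn; lia|]. split.
    { intros f x. rewrite Nat.add_succ_comm, (Hgo x). eapply exec_halt; [reflexivity | acc | reflexivity]. }
    split.
    { eapply InvG_frame; [exact HI| frame1 | frame1]. }
    intros Hmq. cbn. rewrite HP, <- HV0, HV0e.
    set (s := (q - m)%nat).
    assert (Hs : (Ev M K hl 0 <= s)%nat) by (unfold s; lia).
    assert (HqS : q = (s + m)%nat) by (unfold s; lia).
    assert (HW : Q xs Z q = Q xs Z s * prodR xs s m) by (rewrite HqS; apply Q_split; lia).
    assert (HQs : 0 < Q xs Z s) by (apply (Q_pos _ _ _ q); [exact Hpos|lia]).
    assert (Hle1 : Q xs Z s <= Q xs Z (Ev M K hl 0)) by (apply Q_mono; [exact Hxs| lia]).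
    assert (Hge : c * Q xs Z (Ev M K hl 0) <= Q xs Z s).
    { destruct (Nat.eq_dec k 1) as [->|Hk1].
      - simpl in Hf. apply Hf. lia.
      - destruct (He 0%nat ltac:(lia)) as (_ & _ & Hj). simpl in Hj. apply Hj. split; [lia|].
        specialize (Hg 1%nat ltac:(lia)). simpl in Hg. unfold s. lia. }
    assert (HW0 : 0 <= prodR xs s m) by (apply prodR_nonneg; intro; apply Hxs).
    rewrite HW. set (a := Q xs Z s) in *. set (b := Q xs Z (Ev M K hl 0)) in *. set (w := prodR xs s m) in *.
    assert (Hab : c <= a / b) by (apply Rmult_le_reg_r with b; [lra|]; unfold Rdiv; rewrite Rmult_assoc, Rinv_l; lra).
    assert (Hab2 : a / b <= 1) by (apply Rmult_le_reg_r with b; [lra|]; unfold Rdiv; rewrite Rmult_assoc, Rinv_l; lra).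
    replace (a * w / b) with (w * (a / b)) by (field; lra). split; nra.
  - apply Nat.leb_gt in Hc1.
    assert (Hc1' : (nreg M (addr K hl) + m <=? q)%nat = false) by (apply Nat.leb_gt; exact Hc1).
    eassert (Hgo : forall x, goes (8+K) (prog c m K) x 44 M 48 _ _).
    { intro x. st. st. st. eapply goes_trans; [ eapply goes_step; [ reflexivity | acc | cbn; rewrite H0, H1, Hc1'; reflexivity ] | ].
      fin. }
    match type of Hgo with forall x, goes _ _ _ _ _ _ _ ?N => eexists; eexists; exists (S N) end.
    split; [cbn; lia|]. split.
    { intros f x. rewrite Nat.add_succ_comm, (Hgo x). eapply exec_halt; [reflexivity | acc | reflexivity]. }
    split.
    { eapply InvG_frame; [exact HI| frame1 | frame1]. }
    intros Hmq. cbn.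
    set (s := (q - m)%nat).
    assert (HqS : q = (s + m)%nat) by (unfold s; lia).
    assert (Hcz : 0 < c / z) by (apply Rdiv_lt_0_compat; lra).
    destruct (Nat.lt_ge_cases s Z) as [HsZ|HsZ].
    + destruct HZ0 as [HZ0|HZ0]; [lia|].
      rewrite (prodR_zero xs s m (Z-1)); [lra | lia | exact HZ0].
    + assert (HkK : k = K) by (destruct Hh as [Hh|Hh]; lia). clear H3. subst k.
      assert (HW : Q xs Z q = Q xs Z s * prodR xs s m) by (rewrite HqS; apply Q_split; lia).
      assert (HQs : 0 < Q xs Z s) by (apply (Q_pos _ _ _ q); [exact Hpos|lia]).
      assert (Hle1 : Q xs Z (Ev M K hl 0) <= Q xs Z s) by (apply Q_mono; [exact Hxs| lia]).
      pose proof (chain (fun i => Q xs Z (Ev M K hl i)) c K ltac:(lra) (fun i Hi => proj1 (proj2 (He i Hi))) (K-1)%nat ltac:(lia)) as Hch.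
      cbn beta in Hch.
      destruct (Hd (K-1)%nat ltac:(lia)) as [Hk1 _].
      assert (Hqle : Q xs Z q <= Q xs Z (Ev M K hl (K-1))) by (apply Q_mono; [exact Hxs| lia]).
      assert (HW0 : 0 <= prodR xs s m) by (apply prodR_nonneg; intro; apply Hxs).
      assert (Hcp : 0 <= c ^ (K-1)) by (apply pow_le; lra).
      set (a := Q xs Z s) in *. set (b := Q xs Z (Ev M K hl 0)) in *. set (w := prodR xs s m) in *.
      assert (Hb : 0 <= b) by (apply Q_nonneg; exact Hxs).
      assert (a * w <= c ^ (K-1) * a) by nra.
      assert (w <= c ^ (K-1)) by nra. lra.
Qed.

Ltac frame8' := intros ?a ?Ha ?Hne; cbn; unfold upd; repeat match goal with |- context [Nat.eqb ?x ?y] => destruct (Nat.eqb_spec x y); [first [lia|congruence]|] end; split; reflexivity.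

Ltac fr8 := cbn -[Nat.eqb]; unfold upd;
  repeat (first [ progress (rewrite ?addr_eqb_r, ?addr_eqb_l by lia); cbn -[Nat.eqb]
                | match goal with |- context [Nat.eqb ?x ?y] =>
                    lazymatch y with context [Nat.eqb _ _] => fail | _ =>
                    lazymatch x with context [Nat.eqb _ _] => fail | _ =>
                    destruct (Nat.eqb_spec x y); try (exfalso; first [lia|congruence]) end end end ]);
  split; reflexivity.

Lemma blockA c m K xs q M : 0 < c < 1 -> (2 <= K)%nat -> (forall i, 0 <= xs i <= 1) ->
  InvG true c m K xs q M ->
  exists b M' n, (n <= 30)%nat /\ goes (8+K) (prog c m K) (xs q) 2 M b M' n /\
    ((b = 44%nat /\ InvG true c m K xs (S q) M') \/ (b = 29%nat /\ InvG false c m K xs (S q) M')).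
Proof.
  intros Hc HK Hxs (hl & k & Z & HI).
  pose proof HI as (H0 & H1 & H2 & H3 & Hk & HZq & HZ0 & Hpos & HP & Hd & _).
  destruct (Hxs q) as [Hx0 Hx1].
  destruct (Rle_dec (xs q) 0) as [Hx|Hx].
  -
    eassert (Hgo : goes (8+K) (prog c m K) (xs q) 2 M 44 _ _).
    { st. st. st. st.
      eapply goes_trans; [ eapply goes_step; [ reflexivity | acc | cbn; match goal with |- context [Rle_dec ?a ?b] => destruct (Rle_dec a b); first [contradiction | (exfalso; lra) | reflexivity] end ] | ].
      st. st. st. st. st. st. st. fin. }
    match type of Hgo with goes _ _ _ _ _ _ _ ?N => eexists; eexists; exists N end.
    split; [cbn; lia|]. split; [exact Hgo|]. left. split; [reflexivity|].
    exists 0%nat, 1%nat, (S q).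
    apply trans_reset; [lra | lia | lra | cbn; rewrite H0; lia | reflexivity | reflexivity | reflexivity | cbn; rewrite H0; lia | reflexivity | reflexivity].
  - assert (Hxp : 0 < xs q) by lra.
    destruct (Rle_dec (rreg M (addr K (hl + (k - 1))) * c) (rreg M 0 * xs q)) as [Hna|Ha].
    + eassert (Hgo : goes (8+K) (prog c m K) (xs q) 2 M 29 _ _).
      { st. st. st. st.
        eapply goes_trans; [ eapply goes_step; [ reflexivity | acc | cbn; match goal with |- context [Rle_dec ?a ?b] => destruct (Rle_dec a b); first [contradiction | (exfalso; lra) | reflexivity] end ] | ].
        st. st. st. st.
        eapply goes_trans; [ eapply goes_step; [ reflexivity | acc | cbn; unfold upd; rewrite H2; rewrite ?addr_eqb_l by lia; cbn; match goal with |- context [Rle_dec ?a ?b] => destruct (Rle_dec a b); first [contradiction | (exfalso; lra) | reflexivity] end ] | ].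
        fin. }
      match type of Hgo with goes _ _ _ _ _ _ _ ?N => eexists; eexists; exists N end.
      split; [cbn; lia|]. split; [exact Hgo|]. right. split; [reflexivity|].
      exists hl, k, Z.
      eapply trans_noapp; [lra | exact Hxs | exact Hxp | exact HI | cbn; rewrite H0; lia | reflexivity | reflexivity | reflexivity | reflexivity | frame8 | ].
      unfold Vv. exact Hna.
    + destruct (Nat.leb K k) eqn:Hov.
      * apply Nat.leb_le in Hov. assert (HkK : k = K) by lia. rewrite HkK in HI, H2, H3, Ha.
        assert (Hov' : Nat.leb K K = true) by (apply Nat.leb_le; lia).
        assert (Hak : addr K (hl + (K - 1) + 1) = addr K (hl + K)) by (f_equal; lia).
        eassert (Hgo : goes (8+K) (prog c m K) (xs q) 2 M 29 _ _).
        { st. st. st. st.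
          eapply goes_trans; [ eapply goes_step; [ reflexivity | acc | cbn; match goal with |- context [Rle_dec ?a ?b] => destruct (Rle_dec a b); first [contradiction | (exfalso; lra) | reflexivity] end ] | ].
          st. st. st. st.
          eapply goes_trans; [ eapply goes_step; [ reflexivity | acc | cbn; unfold upd; rewrite H2; rewrite ?addr_eqb_l by lia; cbn; match goal with |- context [Rle_dec ?a ?b] => destruct (Rle_dec a b); first [contradiction | (exfalso; lra) | reflexivity] end ] | ].
          st. st.
          eapply goes_trans; [ eapply goes_step; [ reflexivity | acc | cbn; rewrite H3, Hov'; reflexivity ] | ].
          eapply goes_trans; [ eapply (wrap_ok c m K (xs q) 17 1 _ hl); [lia|lia|lia|reflexivity|reflexivity|reflexivity|reflexivity|reflexivity| cbn; reflexivity | cbn; exact H1] | ].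
          cbn [Nat.add].
          eapply goes_trans; [ eapply (wrap_ok c m K (xs q) 22 2 _ (hl + (K - 1))); [lia|lia|lia|reflexivity|reflexivity|reflexivity|reflexivity|reflexivity| cbn; reflexivity | cbn; exact H2] | ].
          cbn [Nat.add]. st. st. fin. }
        match type of Hgo with goes _ _ _ _ _ _ _ ?N => eexists; eexists; exists N end.
        split; [cbn; lia|]. split; [exact Hgo|]. right. split; [reflexivity|].
        exists (hl + 1)%nat, K, Z.
        eapply trans_ovf; [lra | exact Hxs | exact Hxp | exact HK | exact HI | .. ].
        all: try (cbn; unfold upd; rewrite ?Hak; rewrite ?Nat.eqb_refl; rewrite ?addr_eqb_r, ?addr_eqb_l by lia; cbn; first [reflexivity | (rewrite ?H0, ?H3; lia)]).
        { intros a Ha8 Hne. rewrite <- Hak in Hne. fr8. }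
        unfold Vv. apply Rnot_le_lt in Ha. lra.
      * apply Nat.leb_gt in Hov.
        assert (Hov' : Nat.leb K k = false) by (apply Nat.leb_gt; lia).
        assert (Hak : addr K (hl + (k - 1) + 1) = addr K (hl + k)) by (f_equal; lia).
        eassert (Hgo : goes (8+K) (prog c m K) (xs q) 2 M 29 _ _).
        { st. st. st. st.
          eapply goes_trans; [ eapply goes_step; [ reflexivity | acc | cbn; match goal with |- context [Rle_dec ?a ?b] => destruct (Rle_dec a b); first [contradiction | (exfalso; lra) | reflexivity] end ] | ].
          st. st. st. st.
          eapply goes_trans; [ eapply goes_step; [ reflexivity | acc | cbn; unfold upd; rewrite H2; rewrite ?addr_eqb_l by lia; cbn; match goal with |- context [Rle_dec ?a ?b] => destruct (Rle_dec a b); first [contradiction | (exfalso; lra) | reflexivity] end ] | ].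
          st. st.
          eapply goes_trans; [ eapply goes_step; [ reflexivity | acc | cbn; rewrite H3, Hov'; reflexivity ] | ].
          st. st.
          eapply goes_trans; [ eapply (wrap_ok c m K (xs q) 22 2 _ (hl + (k - 1))); [lia|lia|lia|reflexivity|reflexivity|reflexivity|reflexivity|reflexivity| cbn; reflexivity | cbn; exact H2] | ].
          cbn [Nat.add]. st. st. fin. }
        match type of Hgo with goes _ _ _ _ _ _ _ ?N => eexists; eexists; exists N end.
        split; [cbn; lia|]. split; [exact Hgo|]. right. split; [reflexivity|].
        exists hl, (S k), Z.
        eapply trans_app; [lra | exact Hxs | exact Hxp | exact Hov | exact HI | .. ].
        all: try (cbn; unfold upd; rewrite ?Hak; rewrite ?Nat.eqb_refl; rewrite ?addr_eqb_r, ?addr_eqb_l by lia; cbn; first [reflexivity | (rewrite ?H0, ?H3; lia)]).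
        { intros a Ha8 Hne. rewrite <- Hak in Hne. fr8. }
        unfold Vv. apply Rnot_le_lt in Ha. lra.
Qed.

Lemma start_ok c m K xs q M x : 0 < c < 1 -> (2 <= K)%nat ->
  (q = 0%nat /\ M = mem0) \/ InvG true c m K xs q M ->
  exists M' n, (n <= 9)%nat /\ goes (8+K) (prog c m K) x 0 M 2 M' n /\ InvG true c m K xs q M'.
Proof.
  intros Hc HK [[-> ->]|HI].
  - eassert (Hgo : goes (8+K) (prog c m K) x 0 mem0 2 _ _).
    { st. eapply goes_trans; [ eapply goes_step; [ reflexivity | acc | cbn; reflexivity ] | ].
      st. st. st.
      eapply goes_trans; [ eapply goes_step; [ reflexivity | apply forallb_forall; intros ? Hin; apply Nat.ltb_lt; cbn in Hin; destruct Hin as [<-|[]]; lia | cbn; reflexivity ] | ].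
      st. st. st. fin. }
    match type of Hgo with goes _ _ _ _ _ _ _ ?N => eexists; exists N end.
    split; [cbn; lia|]. split; [exact Hgo|].
    exists 0%nat, 1%nat, 0%nat.
    assert (A0 : addr K 0 = 8%nat) by (apply addr_0; lia).
    unfold InvR, Ev, Vv. cbn [Nat.sub Nat.add]. rewrite ?A0. cbn -[Q].
    split; [reflexivity|]. split; [reflexivity|]. split; [reflexivity|].
    split; [reflexivity|]. split; [lia|]. split; [lia|].
    split; [left; reflexivity|].
    split; [intros; lia|]. split; [rewrite Q_self; reflexivity|].
    split; [intros i Hi; replace i with 0%nat by lia; rewrite A0; cbn -[Q]; rewrite Q_self; split; [lia|reflexivity]|].
    split; [intros; lia|]. split.
    { intros j Hj. replace j with 0%nat by lia. rewrite Q_self. lra. }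
    split; [intros; lia|]. intros _; left; reflexivity.
  - pose proof HI as (hl & k & Z & H0 & H1 & _).
    assert (Hb : Nat.leb (addr K hl) 0 = false) by (apply Nat.leb_gt; pose proof (addr_ge K hl); lia).
    eassert (Hgo : goes (8+K) (prog c m K) x 0 M 2 _ _).
    { st. eapply goes_trans; [ eapply goes_step; [ reflexivity | acc | cbn; rewrite H1, Hb; reflexivity ] | ].
      fin. }
    match type of Hgo with goes _ _ _ _ _ _ _ ?N => eexists; exists N end.
    split; [cbn; lia|]. split; [exact Hgo|].
    eapply InvG_frame; [exact HI| frame1 | frame1].
Qed.

Lemma arrival c z m K xs q M :
  0 < c < 1 -> 0 < z -> (1 <= m)%nat -> (2 <= K)%nat -> (forall i, 0 <= xs i <= 1) -> c ^ (K-1) <= c / z ->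
  (q = 0%nat /\ M = mem0) \/ InvG true c m K xs q M ->
  exists o M', exec 70 (8+K) (prog c m K) (xs q) 0 M = Some (o, M') /\ InvG true c m K xs (S q) M' /\
    ((m <= S q)%nat -> spec c z xs (S q) m o).
Proof.
  intros Hc Hz Hm HK Hxs HcK Hst.
  destruct (start_ok c m K xs q M (xs q) Hc HK Hst) as (M2 & n0 & Hn0 & G0 & I2).
  destruct (blockA c m K xs q M2 Hc HK Hxs I2) as (b & M3 & n1 & Hn1 & G1 & [[-> I3] | [-> I3]]).
  - destruct (out_ok c z m K xs (S q) M3 Hc Hz Hm HK Hxs HcK I3) as (o & M5 & n3 & Hn3 & E3 & I5 & S5).
    exists o, M5. split; [|split; assumption].
    replace 70%nat with (n0 + (n1 + (n3 + (70 - n0 - n1 - n3))))%nat by lia.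
    rewrite G0, G1. apply E3.
  - destruct (pop_ok c m K xs (S q) M3 (xs q) HK I3) as (M4 & n2 & Hn2 & G2 & I4).
    destruct (out_ok c z m K xs (S q) M4 Hc Hz Hm HK Hxs HcK I4) as (o & M5 & n3 & Hn3 & E3 & I5 & S5).
    exists o, M5. split; [|split; assumption].
    replace 70%nat with (n0 + (n1 + (n2 + (n3 + (70 - n0 - n1 - n2 - n3)))))%nat by lia.
    rewrite G0, G1, G2. apply E3.
Qed.

Lemma run_S T sp P xs q : run T sp P xs (S q) =
  match run T sp P xs q with Some (_, M) => exec T sp P (xs q) 0 M | None => None end.
Proof. reflexivity. Qed.

Lemma run_ok c z m K xs :
  0 < c < 1 -> 0 < z -> (1 <= m)%nat -> (2 <= K)%nat -> (forall i, 0 <= xs i <= 1) -> c ^ (K-1) <= c / z ->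
  forall q, exists o M, run 70 (8+K) (prog c m K) xs q = Some (o, M) /\
    ((q = 0%nat /\ M = mem0) \/ InvG true c m K xs q M) /\ ((m <= q)%nat -> spec c z xs q m o).
Proof.
  intros Hc Hz Hm HK Hxs HcK q. induction q as [|q IH].
  - exists ResNone, mem0. split; [reflexivity|]. split; [left; split; reflexivity|]. intros; lia.
  - destruct IH as (o & M & Hr & Hst & _).
    destruct (arrival c z m K xs q M Hc Hz Hm HK Hxs HcK Hst) as (o' & M' & He & HI & Hs).
    exists o', M'. split; [rewrite run_S, Hr; exact He|]. split; [right; exact HI| exact Hs].
Qed.

Lemma pow_bound eps z N : 0 < eps < 1 -> 1 < z -> ln z / ln (1 / (1 - eps)) <= INR N ->
  (1 - eps) ^ N <= 1 / z.
Proof.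
  intros He Hz HN.
  set (c := 1 - eps) in *.
  assert (Hc : 0 < c < 1) by (unfold c; lra).
  assert (HL : ln (1 / c) = - ln c) by (unfold Rdiv; rewrite Rmult_1_l; apply ln_Rinv; lra).
  assert (Hlc : ln c < 0) by (rewrite <- ln_1; apply ln_increasing; lra).
  assert (Hlz : 0 < ln z) by (rewrite <- ln_1; apply ln_increasing; lra).
  rewrite HL in HN.
  assert (Hk : INR N * ln c <= - ln z).
  { apply Rmult_le_compat_r with (r := - ln c) in HN; [|lra].
    replace (ln z / - ln c * - ln c) with (ln z) in HN by (field; lra). rewrite Ropp_mult_distr_r_reverse in HN. lra. }
  rewrite <- (exp_ln (c ^ N)) by (apply pow_lt; lra).
  rewrite ln_pow by lra.
  replace (1 / z) with (exp (- ln z)) by (rewrite exp_Ropp, exp_ln by lra; field; lra).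
  destruct (Rle_lt_or_eq_dec _ _ Hk) as [Hlt|Heq].
  - left. apply exp_increasing. exact Hlt.
  - rewrite Heq. lra.
Qed.

Theorem lemma1 :
  exists C : R,
  forall (eps z : R) (m : nat),
    0 < eps < 1 -> 1 < z -> (1 <= m)%nat ->
    exists (P : list instr) (T sp : nat),
      INR T <= C /\
      INR sp <= C * (1 + ln z / ln (1 / (1 - eps))) /\
      forall xs : nat -> R,
        (forall i, 0 <= xs i <= 1) ->
        forall q : nat,
          run T sp P xs q <> None /\
          ((m <= q)%nat ->
           match run T sp P xs q with
           | Some (ResNum v, _) =>
               (1 - eps) * prodR xs (q - m) m <= v /\ v <= prodR xs (q - m) m
           | Some (ResNo, _) => prodR xs (q - m) m <= (1 - eps) / z
           | _ => False
           end).
Proof.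
  exists 100. intros eps z m He Hz Hm.
  set (r := ln z / ln (1 / (1 - eps))).
  assert (HL : 0 < ln (1 / (1 - eps))).
  { rewrite <- ln_1. apply ln_increasing; [lra|]. apply Rmult_lt_reg_r with (1 - eps); [lra|].
    unfold Rdiv. rewrite Rmult_assoc, Rinv_l by lra. lra. }
  assert (Hlz : 0 < ln z) by (rewrite <- ln_1; apply ln_increasing; lra).
  assert (Hr : 0 < r) by (unfold r; apply Rdiv_lt_0_compat; lra).
  destruct (archimed r) as [Hup1 Hup2].
  assert (Hup0 : (0 <= up r)%Z) by (apply le_IZR; simpl; lra).
  set (N := Z.to_nat (up r)).
  assert (HN : INR N = IZR (up r)) by (unfold N; rewrite INR_IZR_INZ, Z2Nat.id by exact Hup0; reflexivity).
  set (K := (2 + N)%nat).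
  exists (prog (1 - eps) m K), 70%nat, (8 + K)%nat.
  split. { simpl. lra. }
  split. { unfold K. rewrite !plus_INR. rewrite HN. simpl. fold r. lra. }
  intros xs Hxs q.
  assert (Hc : 0 < 1 - eps < 1) by lra.
  assert (HcK : (1 - eps) ^ (K - 1) <= (1 - eps) / z).
  { replace (K - 1)%nat with (S N) by (unfold K; lia). simpl.
    pose proof (pow_bound eps z N He Hz ltac:(fold r; lra)).
    unfold Rdiv. apply Rmult_le_compat_l; lra. }
  destruct (run_ok (1 - eps) z m K xs Hc ltac:(lra) Hm ltac:(unfold K; lia) Hxs HcK q) as (o & M & Hrun & _ & Hs).
  rewrite Hrun. split; [discriminate|].
  intros Hmq. specialize (Hs Hmq). destruct o; exact Hs.
Qed.
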